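(* Let $\mathbf{L}$ be a distributive lattice, $n\ge1$ an integer and $F$ an upset of $\mathbf{L}$. The following are equivalent: (i) $F$ is an $n$-prime filter; (ii) $F$ is a filter and $F$ is an intersection of at most $n$ prime upsets; (iii) $F$ is an intersection of at most $n$ prime filters; (iv) there is a lattice homomorphism $h\colon\mathbf{L}\to\mathbf{2}^n$ with $F=h^{-1}[\{1\}]$, where $\mathbf{2}^n$ is the Boolean lattice with $n$ atoms and $1$ its top element.
   Context: A filter on a lattice is an upset closed under binary meets (the empty set and the whole lattice count). An upset $F$ is prime if $a\vee b\in F$ implies $a\in F$ or $b\in F$; a prime filter is a filter which is a prime upset. A filter $F$ is $n$-prime if for all $x_1,\dots,x_{n+1}$: $x_1\vee\dots\vee x_{n+1}\in F$ implies $\bigvee_{j\neq i}x_j\in F$ for some $i\in\{1,\dots,n+1\}$. An intersection of zero sets is the whole lattice. Lattice homomorphisms need not preserve bounds. *)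

(* Defs.v *)
From HB Require Import structures.
From mathcomp Require Import all_boot all_order.
Set Implicit Arguments. Unset Strict Implicit. Unset Printing Implicit Defensive.
Import Order.Theory.
Local Open Scope order_scope.

Section LatticeDefs.
Context {d : Order.disp_t} {L : distrLatticeType d}.

Definition upset (F : L -> Prop) : Prop :=
  forall x y : L, x <= y -> F x -> F y.

(* filters: upsets closed under binary meets (empty set and L allowed) *)
Definition is_filter (F : L -> Prop) : Prop :=
  upset F /\ forall x y : L, F x -> F y -> F (x `&` y).

Definition prime_upset (F : L -> Prop) : Prop :=
  upset F /\ forall a b : L, F (a `|` b) -> F a \/ F b.

Definition prime_filter (F : L -> Prop) : Prop :=
  is_filter F /\ prime_upset F.

(* Join of the nonempty subfamily (x_j)_{j | P j}; the seed x0 must be one of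
   the joined elements (it is then absorbed by idempotence), which avoids
   needing a bottom element. *)
Definition njoin (m : nat) (x0 : L) (P : pred 'I_m) (x : 'I_m -> L) : L :=
  \big[Order.join/x0]_(j | P j) x j.

(* an index of 'I_n.+1 different from i (valid when n >= 1) *)
Definition other_index (n : nat) (i : 'I_n.+1) : 'I_n.+1 :=
  if i == ord0 then ord_max else ord0.

Definition n_prime_filter (n : nat) (F : L -> Prop) : Prop :=
  is_filter F /\
  forall x : 'I_n.+1 -> L,
    F (njoin (x ord0) predT x) ->
    exists i : 'I_n.+1, F (njoin (x (other_index i)) (fun j => j != i) x).

(* F is the intersection of the family (G i)_{i < k} (k = 0 gives all of L) *)
Definition is_intersection (k : nat) (G : 'I_k -> L -> Prop) (F : L -> Prop) : Prop :=
  forall x : L, F x <-> (forall i : 'I_k, G i x).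

(* lattice homomorphism into 2^n, represented as the powerset {set 'I_n}
   (Boolean lattice with n atoms) with intersection / union *)
Definition lattice_hom_2n (n : nat) (h : L -> {set 'I_n}) : Prop :=
  (forall x y : L, h (x `&` y) = h x :&: h y) /\
  (forall x y : L, h (x `|` y) = h x :|: h y).

End LatticeDefs.

(* Main.v *)
Require Import Defs.
From HB Require Import structures.
From mathcomp Require Import all_boot all_order.
From mathcomp Require Import boolp.
From Stdlib Require Import Classical.
Import Order.Theory.
Local Open Scope order_scope.

Section Aux.
Context {d : Order.disp_t} {L : distrLatticeType d}.

Lemma bjoin_ub (I : eqType) (s : seq I) (P : pred I) (f : I -> L) x0 j :
  j \in s -> P j -> f j <= \big[Order.join/x0]_(k <- s | P k) f k.
Proof.
elim: s => [//|a s IH]; rewrite inE big_cons => /orP [/eqP-> Pj|js Pj].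
  by rewrite Pj leUl.
case: (P a); last exact: IH.
exact: le_trans (IH js Pj) (leUr _ _).
Qed.

Lemma bmeet_lb (I : eqType) (s : seq I) (P : pred I) (f : I -> L) x0 j :
  j \in s -> P j -> \big[Order.meet/x0]_(k <- s | P k) f k <= f j.
Proof.
elim: s => [//|a s IH]; rewrite inE big_cons => /orP [/eqP-> Pj|js Pj].
  by rewrite Pj leIl.
case: (P a); last exact: IH.
exact: le_trans (leIr _ _) (IH js Pj).
Qed.

Lemma njoin_ub m x0 (P : pred 'I_m) (x : 'I_m -> L) j :
  P j -> x j <= njoin x0 P x.
Proof. by move=> Pj; apply: bjoin_ub => //; exact: mem_index_enum. Qed.

Lemma njoin_lub m x0 (P : pred 'I_m) (x : 'I_m -> L) u :
  x0 <= u -> (forall j, P j -> x j <= u) -> njoin x0 P x <= u.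
Proof.
move=> h0 h; rewrite /njoin; apply: (big_ind (fun z => z <= u)) => //.
by move=> a b ha hb; rewrite leUx ha hb.
Qed.

Lemma prime_split (G : L -> Prop) m (P : pred 'I_m) (x : 'I_m -> L) i0 :
  prime_upset G -> P i0 -> G (njoin (x i0) P x) -> exists j, P j /\ G (x j).
Proof.
move=> [_ hG] Pi0; rewrite /njoin.
apply: (big_ind (fun z => G z -> exists j, P j /\ G (x j))).
- by move=> h; exists i0.
- by move=> a b ha hb /hG [/ha|/hb].
- by move=> j Pj Gj; exists j.
Qed.

Lemma other_ne n (i : 'I_n.+2) : other_index i != i.
Proof.
rewrite /other_index; case: (eqVneq i ord0) => [->|ne] //; by rewrite eq_sym.
Qed.

Arguments other_ne {n}.

Variable F : L -> Prop.
Hypothesis hF : upset F.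

Definition badt k (c : 'I_k.+2 -> L) :=
  F (njoin (c ord0) predT c) /\
  forall i, ~ F (njoin (c (other_index i)) (fun j => j != i) c).

Arguments badt {k}.

Lemma mk_bad k (c : 'I_k.+2 -> L) :
  (forall w, (forall j, c j <= w) -> F w) ->
  (forall i, exists v, ~ F v /\ forall j, j != i -> c j <= v) ->
  badt c.
Proof.
move=> H1 H3; split.
  by apply: H1 => j; apply: njoin_ub.
move=> i Fi; have [v [nv hv]] := H3 i; apply: nv; apply: hF Fi.
apply: njoin_lub; first exact/hv/other_ne.
exact: hv.
Qed.

Definition ext k (y0 : L) (f : 'I_k.+2 -> L) : 'I_k.+3 -> L :=
  fun p => if unlift ord0 p is Some j then f j else y0.

Arguments ext {k}.

Lemma ext_bad k y0 (f : 'I_k.+2 -> L) :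
  (forall w, y0 <= w -> (forall j, f j <= w) -> F w) ->
  (exists v, ~ F v /\ forall j, f j <= v) ->
  (forall i, exists v, ~ F v /\ y0 <= v /\ forall j, j != i -> f j <= v) ->
  badt (ext y0 f).
Proof.
move=> H1 H2 H3; apply: mk_bad.
  move=> w hw; apply: H1.
    by have := hw ord0; rewrite /ext unlift_none.
  by move=> j; have := hw (lift ord0 j); rewrite /ext liftK.
move=> p; case: (unliftP ord0 p) => [i ->|->].
  have [v [nv [h0 hv]]] := H3 i; exists v; split=> // j.
  case: (unliftP ord0 j) => [j' ->|->]; rewrite /ext ?liftK ?unlift_none //.
  by move=> ne; apply: hv; apply: contra ne => /eqP->.
have [v [nv hv]] := H2; exists v; split=> // j.
case: (unliftP ord0 j) => [j' ->|->]; rewrite /ext ?liftK ?unlift_none //.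
Qed.

Hypothesis hfil : is_filter F.

Definition dd k (c : 'I_k.+2 -> L) i := njoin (c (other_index i)) (fun j => j != i) c.

Arguments dd {k}.

Lemma mainM k (c : 'I_k.+2 -> L) :
  badt c -> (forall c' : 'I_k.+3 -> L, ~ badt c') ->
  is_intersection (fun i z => F (z `|` dd c i)) F /\
  forall i, prime_filter (fun z => F (z `|` dd c i)).
Proof.
move=> [CF dnF] noext.
have cd : forall i j, j != i -> c j <= dd c i by move=> i j ne; apply: njoin_ub.
have Cle : forall i, njoin (c ord0) predT c <= c i `|` dd c i.
  move=> i; apply: njoin_lub => [|j _]; (case: (eqVneq (ord0 : 'I_k.+2) i) => [<-|ne];
   [exact: leUl| exact: le_trans (cd _ _ ne) (leUr _ _)]) || (case: (eqVneq j i) => [->|ne];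
   [exact: leUl| exact: le_trans (cd _ _ ne) (leUr _ _)]).
have hm := hfil.2.
split.
  move=> x; split.
    by move=> Fx i; apply: hF Fx; apply: leUl.
  move=> hx; apply: NNPP => nx.
  pose e := \big[Order.meet/dd c ord0]_(i : 'I_k.+2) dd c i.
  apply: (noext (ext e (fun j => x `&` c j))); apply: ext_bad.
  - move=> w he hf.
    have Fex : F (e `|` x).
      pose K z := F (z `|` x).
      have : K e; last by [].
      apply: big_ind.
      + by rewrite /K joinC; apply: hx.
      + by move=> a b ha hb; rewrite /K joinIl; apply: hm.
      + by move=> i _; rewrite /K joinC; apply: hx.
    have FeC : F (e `|` njoin (c ord0) predT c) by apply: hF CF; apply: leUr.
    apply: (hF _ _ _ (hm _ _ Fex FeC)); rewrite -joinIr leUx he /=.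
    rewrite /njoin; apply: (big_ind (fun z => x `&` z <= w)).
    + exact: hf.
    + by move=> a b ha hb; rewrite meetUr leUx ha hb.
    + by move=> j _; apply: hf.
  - by exists x; split=> // j; apply: leIl.
  - move=> i; exists (dd c i); split; first exact: dnF.
    split; first by apply: bmeet_lb => //; exact: mem_index_enum.
    by move=> j ne; apply: le_trans (leIr _ _) (cd _ _ ne).
move=> i; split; [split|split].
- by move=> x y le; apply: hF; apply: leU2.
- by move=> x y hx hy; rewrite joinIl; apply: hm.
- by move=> x y le; apply: hF; apply: leU2.
move=> a b Hab; apply: NNPP => nab.
have na : ~ F (a `|` dd c i) by move=> h; apply: nab; left.
have nb : ~ F (b `|` dd c i) by move=> h; apply: nab; right.
apply: (noext (ext (a `&` c i) (fun j => if j == i then b `&` c i else c j))).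
apply: ext_bad.
- move=> w hy0 hf.
  apply: (hF _ _ _ (hm _ _ Hab (hF _ _ (Cle i) CF))).
  rewrite -joinIl meetUl !leUx hy0 /=.
  apply/andP; split; first by have := hf i; rewrite eqxx.
  apply: njoin_lub.
    by have := hf (other_index i); rewrite (negbTE (other_ne i)).
  by move=> j ne; have := hf j; rewrite (negbTE ne).
- exists (b `|` dd c i); split=> // j; case: eqP => [_|/eqP ne].
    exact: le_trans (leIl _ _) (leUl _ _).
  exact: le_trans (cd _ _ ne) (leUr _ _).
- move=> i'; case: (eqVneq i' i) => [->|ne].
    exists (a `|` dd c i); split=> //; split; first exact: le_trans (leIl _ _) (leUl _ _).
    by move=> j ne; rewrite (negbTE ne); exact: le_trans (cd _ _ ne) (leUr _ _).
  exists (dd c i'); split; first exact: dnF.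
  have ci : c i <= dd c i' by apply: cd; rewrite eq_sym.
  split; first exact: le_trans (leIr _ _) ci.
  move=> j nj; case: eqP => [_|_]; first exact: le_trans (leIr _ _) ci.
  exact: cd.
Qed.


Lemma base_prime : (forall c : 'I_2 -> L, ~ badt c) -> prime_upset F.
Proof.
move=> nob; split=> // a b Hab; apply: NNPP => nab.
apply: (nob (fun j => if j == ord0 then a else b)); apply: mk_bad.
  move=> w hw; apply: (hF _ _ _ Hab); rewrite leUx.
  by have := hw ord0; have := hw ord_max; rewrite /= => -> ->.
move=> i; case: (eqVneq i ord0) => [->|ne].
  exists b; split; first by move=> h; apply: nab; right.
  by move=> j /negbTE ->.
exists a; split; first by move=> h; apply: nab; left.
move=> j nj; have -> : j == ord0; last by [].
move: ne nj; case: i => [[|[|i]] Hi] //; case: j => [[|[|j]] Hj] //.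
Qed.

Lemma induct m : forall t, (forall c : 'I_t.+2 -> L, ~ badt c) -> (t.+2 <= m.+2)%N ->
  exists (k : nat) (G : 'I_k -> L -> Prop),
    (k <= m.+1)%N /\ (forall i, prime_filter (G i)) /\ is_intersection G F.
Proof.
elim=> [|t IH] nob le.
  exists 1, (fun _ => F); split=> //; split.
    by move=> _; split=> //; apply: base_prime.
  by move=> x; split=> [h _ //|]; apply; exact: ord0.
case: (classic (exists c : 'I_t.+2 -> L, badt c)) => [[c bc]|nc].
  have [hi hp] := mainM _ _ bc nob.
  by exists t.+2, (fun i z => F (z `|` dd c i)); split.
apply: IH => [c bc|]; first by apply: nc; exists c.
by apply: leq_trans le.
Qed.

End Aux.

Section Dirs.
Context {d : Order.disp_t} {L : distrLatticeType d}.
Variables (n : nat) (hn : (1 <= n)%N) (F : L -> Prop) (hF : upset F).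

Definition P3 := exists (k : nat) (G : 'I_k -> L -> Prop),
  (k <= n)%N /\ (forall i, prime_filter (G i)) /\ is_intersection G F.

Lemma d13 : n_prime_filter n F -> P3.
Proof.
move=> [hfil hnp]; rewrite /P3; move: hn hnp; case: n => [//|m] _ hnp.
apply: (@induct _ _ F hF hfil m m) => // c [c1 c2].
by have [i hi] := hnp c c1; apply: (c2 i).
Qed.

Lemma d34 : P3 -> exists h : L -> {set 'I_n},
  lattice_hom_2n h /\ forall x : L, F x <-> h x = [set: 'I_n].
Proof.
move=> [k [G [hk [hp hi]]]].
pose G' (i : 'I_n) z := forall j : 'I_k, val j = val i -> G j z.
have up : forall i, upset (G' i).
  by move=> i x y le hx j ej; apply: ((hp j).1.1 x y le); apply: hx.
have mt : forall i x y, G' i (x `&` y) <-> G' i x /\ G' i y.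
  move=> i x y; split.
    by move=> h; split; apply: up h; [apply: leIl|apply: leIr].
  by move=> [h1 h2] j ej; apply: (hp j).1.2; [apply: h1|apply: h2].
have jn : forall i x y, G' i (x `|` y) <-> G' i x \/ G' i y.
  move=> i x y; split; last by case=> h; apply: up h; [apply: leUl|apply: leUr].
  case: (ltnP i k) => [lt|ge] h.
    have [h1|h2] := (hp (Ordinal lt)).2.2 _ _ (h (Ordinal lt) erefl).
      by left=> j ej; have -> : j = Ordinal lt by apply: val_inj.
    by right=> j ej; have -> : j = Ordinal lt by apply: val_inj.
  by left=> j ej; have := ltn_ord j; rewrite ej ltnNge ge.
exists (fun z => [set i | `[< G' i z >] ]); split; first split.
- move=> x y; apply/setP => i; rewrite !inE.
  apply/asboolP/andP => [/mt [h1 h2]|[/asboolP h1 /asboolP h2]].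
    by split; apply/asboolP.
  by apply/mt.
- move=> x y; apply/setP => i; rewrite !inE.
  apply/asboolP/orP => [/jn [h1|h2]|[/asboolP h1|/asboolP h2]].
  + by left; apply/asboolP.
  + by right; apply/asboolP.
  + by apply/jn; left.
  + by apply/jn; right.
move=> x; split.
  move=> Fx; apply/setP => i; rewrite !inE; apply/asboolP => j _.
  exact: (hi x).1 Fx j.
move=> hx; apply/(hi x) => j.
have : widen_ord hk j \in [set: 'I_n] by rewrite in_setT.
by rewrite -hx inE => /asboolP; apply.
Qed.

Lemma d43 : (exists h : L -> {set 'I_n},
  lattice_hom_2n h /\ forall x : L, F x <-> h x = [set: 'I_n]) -> P3.
Proof.
move=> [h [[hm hj] hx]]; exists n, (fun i z => i \in h z); split=> //; split.
  move=> i; split; split.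
  - move=> x y /join_idPr <-; rewrite hj inE => ->; by [].
  - by move=> x y h1 h2; rewrite hm inE h1 h2.
  - move=> x y /join_idPr <-; rewrite hj inE => ->; by [].
  - by move=> a b; rewrite hj inE => /orP.
move=> x; rewrite hx; split.
  by move=> -> i; rewrite inE.
by move=> H; apply/setP => i; rewrite inE H.
Qed.

Lemma d32 : P3 -> is_filter F /\ exists (k : nat) (G : 'I_k -> L -> Prop),
  (k <= n)%N /\ (forall i, prime_upset (G i)) /\ is_intersection G F.
Proof.
move=> [k [G [hk [hp hi]]]]; split; last first.
  by exists k, G; split=> //; split=> // i; exact: (hp i).2.
split=> x y.
  by move=> le /hi H; apply/hi => i; apply: ((hp i).1.1 x y le).
by move=> /hi H1 /hi H2; apply/hi => i; apply: (hp i).1.2.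
Qed.


Lemma d21 : (is_filter F /\ exists (k : nat) (G : 'I_k -> L -> Prop),
  (k <= n)%N /\ (forall i, prime_upset (G i)) /\ is_intersection G F) ->
  n_prime_filter n F.
Proof.
move=> [hfil [k [G [hk [hp hi]]]]]; split=> // x /hi Hx.
have sp : forall i, exists j, G i (x j).
  move=> i; have [j [_ Gj]] := @prime_split _ _ (G i) _ predT x ord0 (hp i) isT (Hx i).
  by exists j.
case: (classic (exists j0, forall i, exists j, j != j0 /\ G i (x j))) => [[j0 hj0]|no].
  exists j0; apply/hi => i; have [j [ne Gj]] := hj0 i.
  by apply: ((hp i).1 _ _ _ Gj); apply: njoin_ub.
have H : forall j0, exists i, forall j, j != j0 -> ~ G i (x j).
  move=> j0; apply: NNPP => H; apply: no; exists j0 => i; apply: NNPP => H2.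
  apply: H; exists i => j jn Gj; apply: H2; exists j; exact: conj jn Gj.
have [f hf] := choice H.
have inj : injective f.
  move=> j0 j1 e; have [j Gj] := sp (f j0).
  case: (eqVneq j j0) => [ej0|n0]; last by case: (hf j0 j n0 Gj).
  case: (eqVneq j j1) => [ej1|n1]; first by rewrite -ej0 -ej1.
  by case: (hf j1 j n1); rewrite -e.
have := @leq_card _ _ f inj; rewrite !card_ord => le.
by have := leq_trans le hk; rewrite ltnn.
Qed.

End Dirs.

Theorem mainTheorem7 (d : Order.disp_t) (L : distrLatticeType d) (n : nat)
  (hn : (1 <= n)%N) (F : L -> Prop) (hF : upset F) :
  [/\ (n_prime_filter n F <->
        (is_filter F /\ exists (k : nat) (G : 'I_k -> L -> Prop),
           (k <= n)%N /\ (forall i, prime_upset (G i)) /\ is_intersection G F)),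
      (n_prime_filter n F <->
        exists (k : nat) (G : 'I_k -> L -> Prop),
           (k <= n)%N /\ (forall i, prime_filter (G i)) /\ is_intersection G F)
    & (n_prime_filter n F <->
        exists h : L -> {set 'I_n},
           lattice_hom_2n h /\ forall x : L, F x <-> h x = [set: 'I_n])].
Proof.
have h13 := @d13 _ _ n hn F hF; have h34 := @d34 _ _ n F; have h43 := @d43 _ _ n F.
have h32 := @d32 _ _ n F; have h21 := @d21 _ _ n F.
split; split.
- by move=> /h13 /h32.
- exact: h21.
- exact: h13.
- by move=> /h32 /h21.
- by move=> /h13 /h34.
- by move=> /h43 /h32 /h21.
Qed.
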